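(* Let $G$ be a finite, simple, undirected, connected graph. Then $O_{R,k}(G)$, viewed as a function of the positive integer $k$ with values in $\{\mathcal{B}=-1,\ \mathcal{N}=0,\ \mathcal{M}=1\}$, is non-decreasing in $k$.
   Context: For vertices $x,y$ of $G$, $d(x,y)$ is the shortest-path distance and $d_k(x,y)=\min\{d(x,y),k+1\}$ for a positive integer $k$. A set $S\subseteq V(G)$ is a distance-$k$ resolving set if for all distinct $x,y\in V(G)$ there exists $z\in S$ with $d_k(x,z)\neq d_k(y,z)$. The Maker-Breaker distance-$k$ resolving game (MB$k$RG) on $G$ is played by two players, Maker and Breaker, who alternately select a vertex of $G$ not yet chosen (no passing). Maker wins if the vertices he selects (at some point) form a distance-$k$ resolving set of $G$; Breaker wins if she prevents this. The $M$-game is the game in which Maker moves first, the $B$-game the one in which Breaker moves first. $O_{R,k}(G)=\mathcal{M}$ if Maker has a winning strategy in both the $M$-game and the $B$-game; $O_{R,k}(G)=\mathcal{B}$ if Breaker has a winning strategy in both; $O_{R,k}(G)=\mathcal{N}$ if the first player has a winning strategy (in both the $M$-game and the $B$-game). The outcomes are ordered $\mathcal{B}<\mathcal{N}<\mathcal{M}$, identified with $-1,0,1$. *)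

(* Defs.v *)
From mathcomp Require Import all_boot all_order all_algebra.
Set Implicit Arguments. Unset Strict Implicit. Unset Printing Implicit Defensive.

(* A finite simple graph: vertex type V : finType, adjacency e : rel V
   (assumed symmetric and irreflexive in the theorem). *)

Fixpoint ball (V : finType) (e : rel V) (n : nat) (x : V) : {set V} :=
  match n with
  | 0 => [set x]
  | n.+1 => ball e n x :|: [set y | [exists z in ball e n x, e z y]]
  end.

(* Shortest-path distance: least n with y within distance n of x
   (for a connected graph this is < #|V|). *)
Definition dist (V : finType) (e : rel V) (x y : V) : nat :=
  find (fun n => y \in ball e n x) (iota 0 #|V|).

Definition distk (V : finType) (e : rel V) (k : nat) (x y : V) : nat :=
  minn (dist e x y) k.+1.

Definition resolving (V : finType) (e : rel V) (k : nat) (S : {set V}) : bool :=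
  [forall x, forall y, (x != y) ==>
     [exists z in S, distk e k x z != distk e k y z]].

(* maker_wins e k fuel M B t : from the position where Maker holds M,
   Breaker holds B and it is Maker's turn iff t, Maker has a winning
   strategy (backward induction on the finite game tree; the game lasts at
   most #|V| further moves, so fuel #|V|.+1 is enough). *)
Fixpoint maker_wins (V : finType) (e : rel V) (k : nat) (fuel : nat)
    (M B : {set V}) (t : bool) : bool :=
  resolving e k M ||
  match fuel with
  | 0 => false
  | f.+1 =>
    let free := ~: (M :|: B) in
    if t then [exists v in free, maker_wins e k f (v |: M) B false]
    else (free != set0) && [forall v in free, maker_wins e k f M (v |: B) true]
  end.

Definition maker_wins_Mgame (V : finType) (e : rel V) (k : nat) : bool :=
  maker_wins e k #|V|.+1 set0 set0 true.
Definition maker_wins_Bgame (V : finType) (e : rel V) (k : nat) : bool :=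
  maker_wins e k #|V|.+1 set0 set0 false.

Definition outcome (V : finType) (e : rel V) (k : nat) : option int :=
  match maker_wins_Mgame e k, maker_wins_Bgame e k with
  | true, true => Some 1%R
  | false, false => Some (-1)%R
  | true, false => Some 0%R         (* N: first player wins both games *)
  | false, true => None
  end.

(* Main.v *)
Require Import Defs.
From mathcomp Require Import all_boot all_order all_algebra.
From mathcomp Require Import zify.
Set Implicit Arguments. Unset Strict Implicit.

Lemma res_sub (V : finType) (e : rel V) k (S S' : {set V}) :
  S \subset S' -> resolving e k S -> resolving e k S'.
Proof.
move=> sub /forallP H; apply/forallP=> x; apply/forallP=> y; apply/implyP=> xy.
have/forallP/(_ y)/implyP/(_ xy)/existsP[z /andP[zS dz]] := H x.
by apply/existsP; exists z; rewrite (subsetP sub) //.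
Qed.

Lemma res_k (V : finType) (e : rel V) k k' (S : {set V}) :
  k <= k' -> resolving e k S -> resolving e k' S.
Proof.
move=> kk /forallP H; apply/forallP=> x; apply/forallP=> y; apply/implyP=> xy.
have/forallP/(_ y)/implyP/(_ xy)/existsP[z /andP[zS dz]] := H x.
apply/existsP; exists z; rewrite zS /=; move: dz; rewrite /distk.
apply: contra => /eqP h; apply/eqP; lia.
Qed.

Lemma res_W (V : finType) (e : rel V) k g (M B : {set V}) t :
  resolving e k M -> maker_wins e k g M B t.
Proof. by case: g => [|g] /= ->. Qed.

Lemma W_k (V : finType) (e : rel V) k k' f : k <= k' -> forall (M B : {set V}) t,
  maker_wins e k f M B t -> maker_wins e k' f M B t.
Proof.
move=> kk; elim: f => [|f IH] M B t /=.
  by rewrite !orbF; apply: res_k.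
case/orP=> [r|]; first by rewrite (res_k kk r).
case: t.
  by case/existsP=> v /andP[vf W]; apply/orP; right; apply/existsP; exists v; rewrite vf IH.
case/andP=> ne /forallP H; apply/orP; right; rewrite ne /=; apply/forallP=> v.
by apply/implyP=> vf; apply: IH; have/implyP := H v; apply.
Qed.

Lemma W_res (V : finType) (e : rel V) k f : forall (M B : {set V}) t,
  maker_wins e k f M B t -> resolving e k (M :|: ~: B).
Proof.
elim: f => [|f IH] M B t /=.
  by rewrite orbF; apply: res_sub; apply: subsetUl.
case/orP=> [r|]; first by apply: res_sub r; apply: subsetUl.
case: t.
  case/existsP=> v /andP[vf W]; apply: res_sub (IH _ _ _ W).
  apply/subsetP=> x; rewrite !inE; move: vf; rewrite !inE negb_or => /andP[_ vB].
  by case/orP=> [/orP[/eqP->|->]|->]; rewrite ?vB ?orbT.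
case/andP=> /set0Pn[v vf] /forallP H.
have/implyP/(_ vf) W := H v; apply: res_sub (IH _ _ _ W).
apply/subsetP=> x; rewrite !inE negb_or.
by case/orP=> [->|/andP[_ ->]]; rewrite ?orbT.
Qed.

Lemma W_mono (V : finType) (e : rel V) k f : forall g, f <= g ->
  forall (M B M' B' : {set V}) t, M \subset M' -> B' \subset B ->
  maker_wins e k f M B t -> maker_wins e k g M' B' t.
Proof.
elim: f => [|f IH] g fg M B M' B' t sM sB.
  by rewrite /= orbF => r; apply: res_W; apply: res_sub r.
move=> W.
case r: (resolving e k M); first by apply: res_W; apply: res_sub r.
have WR := W_res W.
move: W; rewrite /= r /=.
case: g fg => [//|g] fg /=.
case: (boolP (~: (M' :|: B') == set0)) => [/eqP f0 _|fne W].
  apply/orP; left; apply: res_sub WR; apply/subsetP=> x; rewrite !inE.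
  case/orP=> [/(subsetP sM)//|xB].
  have: x \notin ~: (M' :|: B') by rewrite f0 inE.
  rewrite !inE negbK => /orP[//|/(subsetP sB)]; by rewrite (negbTE xB).
apply/orP; right.
case: t W.
  case/existsP=> v /andP[vf W].
  case: (boolP (v \in ~: (M' :|: B'))) => vf'.
    apply/existsP; exists v; rewrite vf' /=; apply: IH W => //.
    by apply: setUS.
  move: vf'; rewrite !inE negbK => vMB.
  have vM' : v \in M'.
    case/orP: vMB => // /(subsetP sB) vB.
    by move: vf; rewrite !inE vB orbT.
  case/set0Pn: fne => u uf; apply/existsP; exists u; rewrite uf /=.
  apply: IH W => //; apply/subsetP=> x; rewrite !inE.
  by case/orP=> [/eqP->|/(subsetP sM)->]; rewrite ?vM' ?orbT.
case/andP=> /set0Pn[v0 v0f] /forallP H.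
apply/forallP=> u; apply/implyP=> uf'.
case: (boolP (u \in ~: (M :|: B))) => uf.
  have/implyP/(_ uf) W := H u; apply: IH W => //; exact: setUS.
have/implyP/(_ v0f) W := H v0; apply: IH W => //.
move: uf; rewrite in_setC negbK in_setU => /orP[uM|uB].
  by move: uf'; rewrite in_setC in_setU (subsetP sM).
apply/subsetP=> x; rewrite !inE => /orP[/eqP->|/(subsetP sB)->]; by rewrite ?uB ?orbT.
Qed.

Lemma WS (V : finType) (e : rel V) k f (M B : {set V}) t :
  maker_wins e k f.+1 M B t = resolving e k M ||
    (if t then [exists v in ~: (M :|: B), maker_wins e k f (v |: M) B false]
     else (~: (M :|: B) != set0) &&
          [forall v in ~: (M :|: B), maker_wins e k f M (v |: B) true]).
Proof. by []. Qed.

Lemma W0 (V : finType) (e : rel V) k (M B : {set V}) t :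
  maker_wins e k 0 M B t = resolving e k M.
Proof. by rewrite /= orbF. Qed.

Lemma W_fuel (V : finType) (e : rel V) k f : forall (M B : {set V}) t,
  #|~: (M :|: B)| <= f -> maker_wins e k f.+1 M B t -> maker_wins e k f M B t.
Proof.
elim: f => [|f IH] M B t.
  rewrite leqn0 cards_eq0 => /eqP f0; rewrite WS W0 f0.
  case/orP=> [//|]; case: t; first by case/existsP=> v; rewrite inE.
  by rewrite eqxx.
move=> hf; rewrite WS [maker_wins _ _ f.+1 _ _ _]WS.
case/orP=> [->//|H]; apply/orP; right; move: H.
case: t.
  case/existsP=> v /andP[vf W]; apply/existsP; exists v; rewrite vf /=.
  apply: IH W; move: hf.
  rewrite (cardsD1 v) vf add1n ltnS; apply: leq_trans; apply: subset_leq_card.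
  apply/subsetP=> x; rewrite !inE !negb_or => /andP[/andP[xv xM] xB].
  by rewrite xv xM xB.
case/andP=> -> /forallP H /=; apply/forallP=> v; apply/implyP=> vf.
have/implyP/(_ vf) W := H v; apply: IH W; move: hf.
rewrite (cardsD1 v) vf add1n ltnS; apply: leq_trans; apply: subset_leq_card.
apply/subsetP=> x; rewrite !inE !negb_or => /andP[xM /andP[xv xB]].
by rewrite xv xM xB.
Qed.

Lemma B_M (V : finType) (e : rel V) k :
  maker_wins_Bgame e k -> maker_wins_Mgame e k.
Proof.
rewrite /maker_wins_Bgame /maker_wins_Mgame => W.
have fr : #|~: ((set0 : {set V}) :|: set0)| <= #|V|.+1.
  by rewrite leqW // max_card.
apply: W_fuel fr _.
case r: (resolving e k set0); first by apply: res_W.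
have := W; rewrite WS r orFb => /andP[/set0Pn[v vf] _].
rewrite WS; apply/orP; right; apply/existsP; exists v; rewrite vf /=.
by apply: (W_mono (leqnn _) _ _ W); rewrite ?sub0set.
Qed.

Lemma Mk (V : finType) (e : rel V) k k' : k <= k' ->
  maker_wins_Mgame e k -> maker_wins_Mgame e k'.
Proof. by move=> kk; apply: W_k. Qed.

Lemma Bk (V : finType) (e : rel V) k k' : k <= k' ->
  maker_wins_Bgame e k -> maker_wins_Bgame e k'.
Proof. by move=> kk; apply: W_k. Qed.

Theorem proposition2p4 (V : finType) (e : rel V) :
  symmetric e -> irreflexive e -> (forall x y : V, connect e x y) ->
  forall k k' : nat, 0 < k -> k <= k' ->
  exists o o' : int,
    outcome e k = Some o /\ outcome e k' = Some o' /\ (o <= o')%R.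
Proof.
move=> _ _ _ k k' _ kk.
have hM := @Mk V e k k' kk; have hB := @Bk V e k k' kk.
have h1 := @B_M V e k; have h2 := @B_M V e k'.
rewrite /outcome.
move: hM hB h1 h2.
case: (maker_wins_Mgame e k); case: (maker_wins_Bgame e k);
case: (maker_wins_Mgame e k'); case: (maker_wins_Bgame e k') => hM hB h1 h2;
  try (by move: (hM isT)); try (by move: (hB isT)); try (by move: (h1 isT));
  try (by move: (h2 isT)).
all: eexists; eexists; split; [reflexivity|split; [reflexivity|]]; done.
Qed.
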